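(* Let $\mathbf{x}_1,\dots,\mathbf{x}_m\in\mathbb{R}^n$ and $y_1,\dots,y_m\in\mathbb{R}$ be such that $y_i=\phi(\mathbf{x}_i)$ for $i=1,\dots,m$, for some function $\phi:\mathbb{R}^n\to\mathbb{R}$. Then for every $\varepsilon>0$ there exist $T>0$ and a function $d_T\in\mathrm{DLSE}_T$ with rational parameters such that $$|d_T(\mathbf{x}_i)-y_i|\leqslant\varepsilon,\quad i=1,\dots,m.$$
   Context: For $T>0$, $\mathrm{LSE}_T$ denotes the class of functions $f_T:\mathbb{R}^n\to\mathbb{R}$ of the form $$f_T(\mathbf{x})=T\log\Big(\sum_{k=1}^K \exp\big(\langle\boldsymbol{\alpha}^{(k)},\mathbf{x}\rangle/T+\beta_k/T\big)\Big)$$ for some positive integer $K$, vectors $\boldsymbol{\alpha}^{(k)}\in\mathbb{R}^n$ and real numbers $\beta_k$. Such a function has rational parameters if $T$ is rational and it can be written in this form with all entries of the $\boldsymbol{\alpha}^{(k)}$ and all $\beta_k$ rational. $\mathrm{DLSE}_T$ is the class of functions $g_T-h_T$ with $g_T,h_T\in\mathrm{LSE}_T$ (same $T$); such a function has rational parameters if $g_T$ and $h_T$ both have rational parameters. *)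

(* Defs.v *)
From HB Require Import structures.
From mathcomp Require Import all_boot all_order all_algebra.
From mathcomp Require Import all_classical all_reals all_analysis.
Set Implicit Arguments. Unset Strict Implicit. Unset Printing Implicit Defensive.
Import Order.TTheory GRing.Theory Num.Theory.
Local Open Scope ring_scope.

Definition dotv (R : realType) (n : nat) (a x : 'rV[R]_n) : R :=
  \sum_(j < n) a 0 j * x 0 j.

Definition lse (R : realType) (n K : nat) (T : R)
  (alpha : 'I_K -> 'rV[R]_n) (beta : 'I_K -> R) (x : 'rV[R]_n) : R :=
  T * ln (\sum_(k < K) expR (dotv (alpha k) x / T + beta k / T)).

Definition is_rational (R : realType) (r : R) : Prop := exists q : rat, r = ratr q.

Definition in_LSE (R : realType) (n : nat) (T : R) (f : 'rV[R]_n -> R) : Prop :=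
  exists (K : nat) (alpha : 'I_K -> 'rV[R]_n) (beta : 'I_K -> R),
    (0 < K)%N /\ forall x, f x = lse T alpha beta x.

Definition in_LSE_rat (R : realType) (n : nat) (T : R) (f : 'rV[R]_n -> R) : Prop :=
  is_rational T /\
  exists (K : nat) (alpha : 'I_K -> 'rV[R]_n) (beta : 'I_K -> R),
    [/\ (0 < K)%N,
        (forall k j, is_rational (alpha k 0 j)),
        (forall k, is_rational (beta k)) &
        forall x, f x = lse T alpha beta x].

Definition in_DLSE_rat (R : realType) (n : nat) (T : R) (d : 'rV[R]_n -> R) : Prop :=
  exists g h : 'rV[R]_n -> R,
    [/\ in_LSE_rat T g, in_LSE_rat T h & forall x, d x = g x - h x].

(* Main.v *)
Require Import Defs.
From HB Require Import structures.
From mathcomp Require Import all_boot all_order all_algebra.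
From mathcomp Require Import all_classical all_reals all_analysis.
From mathcomp Require Import ring lra.
Set Implicit Arguments. Unset Strict Implicit. Unset Printing Implicit Defensive.
Import Order.TTheory GRing.Theory Num.Theory.
Local Open Scope ring_scope.

Lemma term_le_sum (R : realDomainType) (I : finType) (F : I -> R) (i : I) :
  (forall j, 0 <= F j) -> F i <= \sum_j F j.
Proof.
move=> F0; rewrite (bigD1 i) //= lerDl; apply: sumr_ge0 => j _; exact: F0.
Qed.

Lemma lse_bounds (R : realType) (K : nat) (T : R) (z : 'I_K -> R) (i0 : 'I_K) :
  0 < T -> (forall k, z k <= z i0) ->
  z i0 <= T * ln (\sum_k expR (z k / T)) <= z i0 + T * ln K%:R.
Proof.
move=> T0 zle.
have Kpos : (0 < K)%N := leq_ltn_trans (leq0n i0) (ltn_ord i0).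
have S1 : expR (z i0 / T) <= \sum_k expR (z k / T).
  rewrite [X in _ <= X](bigD1 i0) //= lerDl sumr_ge0 // => k _.
have S0 : 0 < \sum_k expR (z k / T) := lt_le_trans (expR_gt0 _) S1.
apply/andP; split.
  by rewrite -ler_pdivrMl // mulrC -[X in X <= _]expRK ler_ln ?posrE ?expR_gt0.
have : \sum_k expR (z k / T) <= K%:R * expR (z i0 / T).
  apply: (le_trans (y := \sum_(k < K) expR (z i0 / T))).
    apply: ler_sum => k _.
    by rewrite ler_expR ler_pM2r // invr_gt0.
  by rewrite sumr_const card_ord mulr_natl.
have KE : 0 < K%:R * expR (z i0 / T) by rewrite mulr_gt0 ?expR_gt0 ?ltr0n.
move=> h0; have h : ln (\sum_k expR (z k / T)) <= ln (K%:R * expR (z i0 / T)).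
  by rewrite ler_ln ?posrE.
move: h; rewrite lnM ?posrE ?expR_gt0 ?ltr0n // expRK => h.
rewrite -[z i0](@mulfVK _ T) ?gt_eqF // (mulrC _ T) -mulrDr ler_pM2l //.
by rewrite addrC.
Qed.

Definition Dist (R : realType) (n : nat) (a p : 'rV[R]_n) : R :=
  \sum_(k < n) (a 0 k - p 0 k) ^+ 2.

Lemma rat_approx (R : realType) (v r : R) : 0 < r -> exists q : rat, `|ratr q - v| <= r.
Proof.
move=> r0; have /rat_in_itvoo [q] : v - r < v + r by lra.
rewrite in_itv /= => /andP [h1 h2]; exists q; rewrite ler_norml; apply/andP; split; lra.
Qed.

Lemma rat_rat (R : realType) (q : rat) : is_rational (ratr q : R).
Proof. by exists q. Qed.

Lemma lse_rat (R : realType) (n K : nat) (qT : rat) (qa : 'I_K -> 'I_n -> rat)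
  (qb : 'I_K -> rat) : (0 < K)%N ->
  in_LSE_rat (ratr qT : R)
    (lse (ratr qT) (fun j => \row_k ratr (qa j k)) (fun j => ratr (qb j))).
Proof.
move=> K0; split; first exact: rat_rat.
exists K, (fun j => \row_k ratr (qa j k)), (fun j => ratr (qb j)); split => //.
  by move=> k j; rewrite mxE; apply: rat_rat.
by move=> k; apply: rat_rat.
Qed.

Lemma sep_lemma (R : realType) (n : nat) (a c p q : 'rV[R]_n) (r : R) (k : 'I_n) :
  0 < r -> n.+2%:R * r < `|a 0 k - c 0 k| ->
  (forall k, `|p 0 k - a 0 k| <= r) -> (forall k, `|q 0 k - c 0 k| <= r) ->
  Dist a p < Dist a q.
Proof.
move=> r0 hd hp hq.
have h1 : Dist a p <= n%:R * r ^+ 2.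
  rewrite /Dist; apply: (le_trans (y := \sum_(k < n) r ^+ 2)).
    apply: ler_sum => j _; rewrite -real_normK ?num_real // distrC.
    by rewrite lerXn2r ?nnegrE // (le_trans _ (hp j)).
  by rewrite sumr_const card_ord mulr_natl.
have h2 : (a 0 k - q 0 k) ^+ 2 <= Dist a q.
  rewrite /Dist [X in _ <= X](bigD1 k) //= lerDl sumr_ge0 // => j _.
  exact: sqr_ge0.
have h3 : `|a 0 k - c 0 k| - r <= `|a 0 k - q 0 k|.
  have := ler_normB (a 0 k - q 0 k) (c 0 k - q 0 k).
  have -> : a 0 k - q 0 k - (c 0 k - q 0 k) = a 0 k - c 0 k by ring.
  rewrite (distrC (c 0 k)) => h; have := hq k; lra.
set N := n%:R in h1 hd; set u := `|a 0 k - q 0 k| in h3.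
have N0 : 0 <= N by rewrite /N ler0n.
have e : (a 0 k - q 0 k) ^+ 2 = u ^+ 2 by rewrite /u real_normK ?num_real.
rewrite e in h2.
have hn2 : n.+2%:R = N + 2 by rewrite /N -addn2 natrD.
rewrite hn2 in hd.
have u0 : (N + 1) * r < u by lra.
have v0 : 0 < (N + 1) * r by apply: mulr_gt0 => //; lra.
have s1 : ((N + 1) * r) ^+ 2 < u ^+ 2 by rewrite ltrXn2r ?nnegrE //; lra.
have s2 : N * r ^+ 2 < ((N + 1) * r) ^+ 2.
  have r2 : 0 < r ^+ 2 by rewrite exprn_gt0.
  rewrite exprMn; have : N < (N + 1) ^+ 2 by nra.
  by move=> h; rewrite ltr_pM2r.
have : N * r ^+ 2 < u ^+ 2 by lra.
lra.
Qed.

Lemma quad_id (R : realType) (n : nat) (M : R) (a q : 'I_n -> R) :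
  \sum_(k < n) (2 * M * q k) * a k + - (M * \sum_(k < n) q k ^+ 2)
  = M * (\sum_(k < n) a k ^+ 2 - \sum_(k < n) (a k - q k) ^+ 2).
Proof.
rewrite mulr_sumr -sumrN -big_split /= mulrBr !mulr_sumr -sumrB.
by apply: eq_bigr => k _; ring.
Qed.

Theorem corollary2 (R : realType) (n m : nat)
  (x : 'I_m -> 'rV[R]_n) (y : 'I_m -> R) (phi : 'rV[R]_n -> R) :
  (forall i, y i = phi (x i)) ->
  forall eps : R, 0 < eps ->
  exists T : R, 0 < T /\
    exists d : 'rV[R]_n -> R,
      in_DLSE_rat T d /\ forall i, `|d (x i) - y i| <= eps.
Proof.
move=> hy eps eps0.
case: (posnP m) => [m0|m0].
  exists (ratr 1); split; first by rewrite rmorph1.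
  exists (fun _ => 0); split; last by move=> i; move: (ltn_ord i); rewrite {2}m0.
  pose g := lse (ratr 1 : R) (fun j : 'I_1 => \row_(k < n) ratr ((fun _ _ => 0%Q) j k))
              (fun j => ratr ((fun _ => 0%Q) j)).
  exists g, g; split; try exact: lse_rat.
  by move=> v; rewrite subrr.
pose s := \sum_(i < m) \sum_(j < m) \sum_(k < n) `|x i 0 k - x j 0 k|^-1.
have s0 : 0 <= s.
  by apply: sumr_ge0 => i _; apply: sumr_ge0 => j _; apply: sumr_ge0 => k _; rewrite invr_ge0.
pose r := (n.+2%:R * (s + 1))^-1.
have r0 : 0 < r by rewrite /r invr_gt0 mulr_gt0 // ?ltr0n //; lra.
have sep : forall i j, x i != x j -> forall p q : 'rV[R]_n,
    (forall k, `|p 0 k - x i 0 k| <= r) -> (forall k, `|q 0 k - x j 0 k| <= r) ->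
    Dist (x i) p < Dist (x i) q.
  move=> i j hij p q hp hq.
  case: (pickP (fun k => x i 0 k != x j 0 k)) => [k hk|hne]; last first.
    by case/eqP: hij; apply/rowP => k; have := hne k => /= /negbFE/eqP.
  apply: (sep_lemma (k := k) r0 _ hp hq).
  have dpos : 0 < `|x i 0 k - x j 0 k| by rewrite normr_gt0 subr_eq0.
  have hs : `|x i 0 k - x j 0 k|^-1 <= s.
    rewrite /s.
    have t1 := @term_le_sum R _ (fun i' : 'I_m => \sum_(j0 < m) \sum_(k0 < n) `|x i' 0 k0 - x j0 0 k0|^-1) i.
    have t2 := @term_le_sum R _ (fun j' : 'I_m => \sum_(k0 < n) `|x i 0 k0 - x j' 0 k0|^-1) j.
    have t3 := @term_le_sum R _ (fun k' : 'I_n => `|x i 0 k' - x j 0 k'|^-1) k.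
    apply: (le_trans (t3 _)); first by move=> k'; rewrite invr_ge0.
    apply: (le_trans (t2 _)); first by move=> j'; apply: sumr_ge0 => k' _; rewrite invr_ge0.
    by apply: t1 => i'; apply: sumr_ge0 => j' _; apply: sumr_ge0 => k' _; rewrite invr_ge0.
  have er : n.+2%:R * r = (s + 1)^-1.
    rewrite /r; field; apply/andP; split; rewrite gt_eqF //; last by have := ler0n R n; lra.
  rewrite er -[X in _ < X]invrK ltf_pV2 ?posrE ?invr_gt0 //; lra.
have [Qf hQ] : {Qf : 'rV[R]_n -> 'I_n -> rat &
    forall v k, `|ratr (Qf v k) - v 0 k| <= r}.
  apply: (@boolp.choice _ _ (fun (v : 'rV[R]_n) (qf : 'I_n -> rat) => forall k, `|ratr (qf k) - v 0 k| <= r)) => v.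
  have [f hf] := boolp.choice (P := fun k q => `|ratr q - v 0 k| <= r)
    (fun k => rat_approx (v 0 k) r0).
  by exists f.
have eps20 : 0 < eps / 2 by lra.
have [Bf hB] : {Bf : 'rV[R]_n -> rat & forall v, `|ratr (Bf v) - phi v| <= eps / 2}.
  exact: (boolp.choice (fun v => rat_approx (phi v) eps20)).
pose P (v : 'rV[R]_n) : 'rV[R]_n := \row_k ratr (Qf v k).
pose b (j : 'I_m) : R := ratr (Bf (x j)).
pose D (i j : 'I_m) : R := Dist (x i) (P (x j)).
have Dge : forall i j, D i i <= D i j.
  move=> i j; have [e|ne] := eqVneq (x i) (x j); first by rewrite /D e.
  apply/ltW; apply: (sep i j ne) => k; rewrite mxE; exact: hQ.
have Dgt : forall i j, x i != x j -> D i i < D i j.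
  move=> i j ne; apply: (sep i j ne) => k; rewrite mxE; exact: hQ.
pose c := \sum_(i < m) \sum_(j < m) `|b j - b i| / (D i j - D i i).
have c0 : 0 <= c.
  apply: sumr_ge0 => i _; apply: sumr_ge0 => j _.
  by rewrite divr_ge0 // subr_ge0.
have [qM hqM] : exists qM : rat, ratr qM \in `]c, c + 1[.
  by apply: rat_in_itvoo; lra.
pose M : R := ratr qM.
move: hqM; rewrite in_itv /= => /andP [cM _].
have M0 : 0 < M by rewrite /M; lra.
have dom : forall i j, b j - b i <= M * (D i j - D i i).
  move=> i j; have [e|ne] := eqVneq (x i) (x j).
    by rewrite /b /D e !subrr mulr0.
  have g0 : 0 < D i j - D i i by rewrite subr_gt0; exact: Dgt.
  have hc : `|b j - b i| / (D i j - D i i) <= c.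
    have t1 := @term_le_sum R _ (fun i' : 'I_m => \sum_(j0 < m) `|b j0 - b i'| / (D i' j0 - D i' i')) i.
    have t2 := @term_le_sum R _ (fun j' : 'I_m => `|b j' - b i| / (D i j' - D i i)) j.
    apply: (le_trans (t2 _)); first by move=> j'; rewrite divr_ge0 // subr_ge0.
    by apply: t1 => i'; apply: sumr_ge0 => j' _; rewrite divr_ge0 // subr_ge0.
  have : `|b j - b i| / (D i j - D i i) <= M by rewrite /M; lra.
  rewrite ler_pdivrMr // => h; apply: le_trans h; exact: ler_norm.
have L0 : 0 <= ln (m%:R : R) by apply: ln_ge0; rewrite ler1n.
have [qT hqT] : exists qT : rat, ratr qT \in `]0, eps / (2 * (ln (m%:R : R) + 1))[.
  by apply: rat_in_itvoo; rewrite divr_gt0 //; lra.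
pose T : R := ratr qT.
move: hqT; rewrite in_itv /= => /andP [T0 TL].
have TL2 : T * ln (m%:R : R) <= eps / 2.
  move: TL; rewrite ltr_pdivlMr; last by lra.
  rewrite -/T => TL; lra.
exists T; split => //.
pose qsq (j : 'I_m) : rat := \sum_(k < n) Qf (x j) k ^+ 2.
pose qa (j : 'I_m) (k : 'I_n) : rat := 2 * qM * Qf (x j) k.
pose alpha (j : 'I_m) : 'rV[R]_n := \row_k ratr (qa j k).
pose g := lse T alpha (fun j => ratr (Bf (x j) - qM * qsq j)).
pose h := lse T alpha (fun j => ratr (- (qM * qsq j))).
exists (fun v => g v - h v); split.
  by exists g, h; split; [exact: lse_rat | exact: lse_rat | by []].
move=> i.
pose a := x i.
pose zh j := dotv (alpha j) a + ratr (- (qM * qsq j)).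
pose zg j := dotv (alpha j) a + ratr (Bf (x j) - qM * qsq j).
have Hzh : forall j, zh j = M * (\sum_(k < n) a 0 k ^+ 2 - D i j).
  move=> j; rewrite /zh /D /Dist /dotv.
  have -> : \sum_(k < n) (x i 0 k - P (x j) 0 k) ^+ 2 =
            \sum_(k < n) (a 0 k - ratr (Qf (x j) k)) ^+ 2.
    by apply: eq_bigr => k _; rewrite mxE.
  rewrite -(quad_id M (fun k => a 0 k) (fun k => ratr (Qf (x j) k))).
  congr (_ + _).
    apply: eq_bigr => k _; rewrite mxE /qa !rmorphM /=.
    by rewrite (_ : ratr 2 = 2) // rmorph_nat.
  by rewrite rmorphN rmorphM /= rmorph_sum /=; congr (- (_ * _)); apply: eq_bigr => k _; rewrite rmorphXn.
have Hzg : forall j, zg j = zh j + b j.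
  by move=> j; rewrite /zg /zh /b rmorphB rmorphN /=; ring.
have domh : forall j, zh j <= zh i.
  by move=> j; rewrite !Hzh ler_pM2l // lerD2l lerN2; exact: Dge.
have domg : forall j, zg j <= zg i.
  move=> j; rewrite !Hzg !Hzh; have := dom i j; lra.
have eg : g a = T * ln (\sum_k expR (zg k / T)).
  by rewrite /g /lse; congr (_ * ln _); apply: eq_bigr => k _; rewrite /zg mulrDl.
have eh : h a = T * ln (\sum_k expR (zh k / T)).
  by rewrite /h /lse; congr (_ * ln _); apply: eq_bigr => k _; rewrite /zh mulrDl.
have /andP [g1 g2] := lse_bounds T0 domg.
have /andP [h1 h2] := lse_bounds T0 domh.
rewrite -eg in g1 g2; rewrite -eh in h1 h2.
have := hB (x i); rewrite -hy ler_norml => /andP [b1 b2].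
rewrite -/a ler_norml; have := Hzg i; rewrite /b in b1 b2 *.
move=> ezg; apply/andP; split; lra.
Qed.
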